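(* Consider an MDP $(\mathcal{S},\mathcal{A},\tau,\mu_0,R_1,\gamma)$ and alternative transition dynamics $\tau':\mathcal{S}\times\mathcal{A}\to\Delta(\mathcal{S})$. Then for any function $\mathcal{L}:\mathcal{S}\times\mathcal{A}\to\mathbb{R}$ there exists a reward function $R_2:\mathcal{S}\times\mathcal{A}\times\mathcal{S}\to\mathbb{R}$ such that $\mathbb{E}_{S'\sim\tau(s,a)}[R_2(s,a,S')]=\mathbb{E}_{S'\sim\tau(s,a)}[R_1(s,a,S')]$ for all $s\in\mathcal{S},a\in\mathcal{A}$ (i.e. $R_2$ is produced from $R_1$ by $S'$-redistribution under $\tau$), and $\mathbb{E}_{S'\sim\tau'(s,a)}[R_2(s,a,S')]=\mathcal{L}(s,a)$ for all $(s,a)$ with $\tau(s,a)\neq\tau'(s,a)$.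
   Context: An MDP is $(\mathcal{S},\mathcal{A},\tau,\mu_0,R,\gamma)$ with finite state set $\mathcal{S}$, finite action set $\mathcal{A}$, transition dynamics $\tau:\mathcal{S}\times\mathcal{A}\to\Delta(\mathcal{S})$, initial distribution $\mu_0\in\Delta(\mathcal{S})$, reward $R:\mathcal{S}\times\mathcal{A}\times\mathcal{S}\to\mathbb{R}$, and $\gamma\in(0,1)$. *)

(* Defs.v *)
From HB Require Import structures.
From mathcomp Require Import all_boot all_order all_algebra.
From mathcomp Require Import reals.
Set Implicit Arguments. Unset Strict Implicit. Unset Printing Implicit Defensive.
Import Order.TTheory GRing.Theory Num.Theory.
Local Open Scope ring_scope.

Definition is_distr (R : realType) (T : finType) (p : {ffun T -> R}) : Prop :=
  (forall t, 0 <= p t) /\ \sum_(t : T) p t = 1.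

Definition is_transition (R : realType) (S A : finType)
  (tau : S -> A -> {ffun S -> R}) : Prop :=
  forall s a, is_distr (tau s a).

Definition expect_next (R : realType) (S A : finType)
  (tau : S -> A -> {ffun S -> R}) (Rw : S -> A -> S -> R) (s : S) (a : A) : R :=
  \sum_(s' : S) tau s a s' * Rw s a s'.

(* Main.v *)
Require Import Defs.
From HB Require Import structures.
From mathcomp Require Import all_boot all_order all_algebra.
From mathcomp Require Import reals.
From mathcomp Require Import ring.
Import Order.TTheory GRing.Theory Num.Theory.
Local Open Scope ring_scope.

Theorem theorem4p1 (R : realType) (S A : finType)
  (tau : S -> A -> {ffun S -> R}) (mu0 : {ffun S -> R})
  (R1 : S -> A -> S -> R) (gamma : R)
  (Htau : is_transition tau) (Hmu0 : is_distr mu0)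
  (Hgamma : 0 < gamma < 1)
  (tau' : S -> A -> {ffun S -> R}) (Htau' : is_transition tau')
  (L : S -> A -> R) :
  exists R2 : S -> A -> S -> R,
    (forall s a, expect_next tau R2 s a = expect_next tau R1 s a) /\
    (forall s a, tau s a <> tau' s a -> expect_next tau' R2 s a = L s a).
Proof.
pose d s a x := tau' s a x - tau s a x.
pose m s a := \sum_y tau s a y * d s a y.
pose v s a x := d s a x - m s a.
pose D s a := \sum_x d s a x ^+ 2.
pose c s a := (L s a - expect_next tau' R1 s a) / D s a.
have Hv : forall s a (t : {ffun S -> R}), \sum_x t x = 1 ->
   \sum_x t x * v s a x = \sum_x t x * d s a x - m s a.
  move=> s a t Ht; rewrite /v.
  under eq_bigr => x _ do rewrite mulrBr.
  by rewrite sumrB -mulr_suml Ht mul1r.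
exists (fun s a x => R1 s a x + c s a * v s a x); split.
  move=> s a; rewrite /expect_next.
  under eq_bigr => x _ do rewrite mulrDr mulrCA.
  rewrite big_split /= -mulr_sumr Hv; last by case: (Htau s a).
  by rewrite subrr mulr0 addr0.
move=> s a Hne; rewrite /expect_next.
under eq_bigr => x _ do rewrite mulrDr mulrCA.
rewrite big_split /= -mulr_sumr Hv; last by case: (Htau' s a).
have -> : \sum_x tau' s a x * d s a x - m s a = D s a.
  rewrite /m /D -sumrB; apply: eq_bigr => x _; rewrite /d; ring.
have DN : D s a != 0.
  apply/negP => /eqP HD; apply: Hne; apply/ffunP => x; apply/eqP.
  rewrite eq_sym -subr_eq0; apply/eqP.
  have : d s a x ^+ 2 = 0.
    apply/eqP; rewrite eq_le sqr_ge0 andbT -HD /D.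
    rewrite (bigD1 x) //= lerDl; apply: sumr_ge0 => i _; exact: sqr_ge0.
  by move/eqP; rewrite sqrf_eq0 => /eqP.
rewrite /c mulfVK //; rewrite /expect_next; ring.
Qed.
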